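(* Let $A$ be a primitive set of composite numbers, and let $v\in(0,1)$. If $P(a)^{1+v}>a$ for all $a\in A$, then the sets $\mathrm{L}_{ac}$, ranging over pairs $(a,c)$ with $a\in A$ and $c\in C_a^v$, are pairwise disjoint (i.e. $\mathrm{L}_{ac}\cap\mathrm{L}_{a'c'}=\emptyset$ whenever $(a,c)\ne(a',c')$).
   Context: $P(a)$ denotes the largest prime factor of $a>1$, and $a^*=a/P(a)$. For an integer $m>1$, $\mathrm{L}_m=\{bm: b\in\mathbb{N},\ \text{every prime } p\mid b \text{ satisfies } p\ge P(m)\}$. For $a\in A$, $C_a^v=\{c\in\mathbb{N}:\ \text{every prime } p\mid c \text{ satisfies } P(a^* )\le p<P(a^* )^{1/\sqrt v}\}$ (note $1\in C_a^v$). A set is primitive if no member divides another. *)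

(* Defs.v *)
From Stdlib Require Import Reals.
From mathcomp Require Import all_boot.

Set Implicit Arguments.
Unset Strict Implicit.
Unset Printing Implicit Defensive.

Definition P (a : nat) : nat := max_pdiv a.

Definition astar (a : nat) : nat := a %/ P a.

Definition composite (a : nat) : Prop := 1 < a /\ ~~ prime a.

Definition primitive_set (A : nat -> Prop) : Prop :=
  forall a b, A a -> A b -> a %| b -> a = b.

Definition Lset (m x : nat) : Prop :=
  exists b, 0 < b /\ (forall p, prime p -> p %| b -> P m <= p) /\ x = b * m.

Definition Cset (a : nat) (v : R) (c : nat) : Prop :=
  0 < c /\ forall p, prime p -> p %| c ->
    P (astar a) <= p /\ Rlt (INR p) (Rpower (INR (P (astar a))) (Rdiv R1 (sqrt v))).

(* Main.v *)
Require Import Defs.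
From Stdlib Require Import Reals Lra Psatz.
From mathcomp Require Import all_boot.
Set Implicit Arguments.
Unset Strict Implicit.

Lemma logn_ndvd r n : ~~ (r %| n) -> logn r n = 0.
Proof.
move=> h; apply/eqP; rewrite eqn0Ngt logn_gt0 mem_primes.
by rewrite (negbTE h) !andbF.
Qed.

Lemma dvd_logn d n : 0 < d -> 0 < n ->
  (forall r, prime r -> logn r d <= logn r n) -> d %| n.
Proof.
move=> d0 n0 h; apply/dvdn_partP => // r.
rewrite mem_primes => /and3P[pr _ _].
by rewrite p_part pfactor_dvdn // h.
Qed.

Lemma logn3 r s p c : 0 < s -> 0 < p -> 0 < c ->
  logn r (s * p * c) = logn r s + logn r p + logn r c.
Proof. by move=> s0 p0 c0; rewrite !lognM // muln_gt0 s0. Qed.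

Lemma lset_val m x : 0 < m -> Lset m x ->
  [/\ 0 < x, m %| x & forall r, prime r -> r < P m -> logn r x = logn r m].
Proof.
move=> m0 [b [b0 [hb ->]]]; split.
- by rewrite muln_gt0 b0.
- exact: dvdn_mull.
move=> r pr lt; rewrite lognM // logn_ndvd //.
by apply/negP => /(hb r pr); rewrite leqNgt lt.
Qed.

Lemma P_of s p c : prime p -> 0 < s -> 0 < c ->
  (forall r, prime r -> r %| s -> r <= p) ->
  (forall r, prime r -> r %| c -> r <= p) -> P (s * p * c) = p.
Proof.
move=> pp s0 c0 hs hc.
have m1 : 1 < s * p * c.
  have := prime_gt1 pp => p1.
  apply: (leq_trans p1); rewrite mulnC mulnA; apply: leq_pmull.
  by rewrite muln_gt0 c0.
rewrite /P; apply/anti_leq/andP; split.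
- have pr := max_pdiv_prime m1.
  have := max_pdiv_dvd (s * p * c); rewrite !Euclid_dvdM // -orbA.
  case/or3P => h.
  + exact: hs.
  + by move: h; rewrite dvdn_prime2 // => /eqP ->.
  + exact: hc.
- apply: max_pdiv_max; rewrite mem_primes pp ltnW //=.
  by rewrite dvdn_mulr // dvdn_mull.
Qed.

Lemma logn_p r p : prime p -> r != p -> logn r p = 0.
Proof. by move=> pp h; rewrite logn_prime // (negbTE h). Qed.

Lemma core s p c q s' p' c' q' x :
  prime p -> prime q -> 1 < s -> q %| s -> (forall r, prime r -> r %| s -> r <= q) ->
  q < p -> 0 < c -> (forall r, prime r -> r %| c -> q <= r /\ r < p) ->
  prime p' -> prime q' -> 1 < s' -> q' %| s' -> (forall r, prime r -> r %| s' -> r <= q') ->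
  q' < p' -> 0 < c' -> (forall r, prime r -> r %| c' -> q' <= r /\ r < p') ->
  0 < x -> s * p * c %| x ->
  (forall r, prime r -> r < p -> logn r x = logn r (s * p * c)) ->
  (forall r, prime r -> r < p' -> logn r x = logn r (s' * p' * c')) ->
  ((p %| c') \/ p <= q' -> q < q' /\ forall r, prime r -> r %| c -> r < q') ->
  (p < p' \/ (p = p' /\ (q < q' \/ (q = q' /\ logn q s <= logn q s')))) ->
  s * p %| s' * p'.
Proof.
move=> pp pq s1 qs hs qp c0 hc pp' pq' s1' qs' hs' qp' c0' hc' x0 dx hx hx' hcross hcase.
have s0 := ltnW s1; have s0' := ltnW s1'.
have p0 := prime_gt0 pp; have p0' := prime_gt0 pp'.
case: hcase => [ltp | [ep hq]].
-
  have pm' : p %| s' * p' * c'.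
    have : 0 < logn p x.
      by rewrite logn_gt0 mem_primes pp x0 (dvdn_trans _ dx) // dvdn_mulr // dvdn_mull.
    by rewrite hx' // logn_gt0 mem_primes => /and3P[].
  have pp'ne : ~~ (p %| p').
    by rewrite dvdn_prime2 //; apply/negP => /eqP e; rewrite e ltnn in ltp.
  rewrite !Euclid_dvdM // (negbTE pp'ne) orbF in pm'.
  have [qq' hrc] : q < q' /\ forall r, prime r -> r %| c -> r < q'.
    apply: hcross; case/orP: pm' => h; [right; exact: hs' | by left].
  have q'p : p <= q'.
    rewrite leqNgt; apply/negP => lt.
    have : 0 < logn q' x.
      rewrite hx' ?(ltn_trans lt ltp) // logn_gt0 mem_primes pq' muln_gt0 muln_gt0 s0' p0' c0' /=.
      by rewrite dvdn_mulr // dvdn_mulr.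
    rewrite hx // logn_gt0 mem_primes => /and3P[_ _].
    rewrite !Euclid_dvdM // -orbA => /or3P[h|h|h].
    + by have := hs _ pq' h; rewrite leqNgt qq'.
    + by move: h; rewrite dvdn_prime2 // => /eqP e; rewrite e ltnn in lt.
    + by have := hrc _ pq' h; rewrite ltnn.
  have ps' : p %| s'.
    case/orP: pm' => // h; have [h1 _] := hc' _ pp h.
    by have -> : p = q' by apply/anti_leq; rewrite h1 q'p.
  have ss' : s %| s'.
    apply: dvd_logn => // r pr.
    case: (boolP (r %| s)) => rs; last by rewrite logn_ndvd.
    have rp : r < p := leq_ltn_trans (hs _ pr rs) qp.
    have := hx _ pr rp; rewrite hx' ?(ltn_trans rp ltp) // !logn3 //.
    rewrite (@logn_p r p') //; last by rewrite ltn_eqF // (ltn_trans rp ltp).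
    rewrite (@logn_ndvd r c'); last first.
      apply/negP => h; have [h1 _] := hc' _ pr h.
      by have := leq_trans q'p h1; rewrite leqNgt rp.
    move=> e; rewrite !addn0 in e; rewrite e -addnA leq_addr //.
  rewrite Gauss_dvd; last first.
    rewrite coprime_sym prime_coprime //; apply/negP => h.
    by have := hs _ pp h; rewrite leqNgt qp.
  by rewrite dvdn_mulr // dvdn_mulr.
-
  subst p'.
  have qq' : q <= q' by case: hq => [/ltnW | [-> _]].
  apply: dvdn_mul => //.
  apply: dvd_logn => // r pr.
  case: (boolP (r %| s)) => rs; last by rewrite logn_ndvd.
  have rq := hs _ pr rs.
  have rp : r < p := leq_ltn_trans rq qp.
  have := hx _ pr rp; rewrite hx' // !logn3 //.
  rewrite (@logn_p r p) //; last by rewrite ltn_eqF.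
  rewrite !addn0.
  move: rq; rewrite leq_eqVlt => /orP[/eqP er | rq].
  + subst r; case: hq => [qlt | [_ hl] _] //.
    rewrite (@logn_ndvd q c'); last first.
      by apply/negP => h; have [h1 _] := hc' _ pq h; rewrite leqNgt qlt in h1.
    by rewrite addn0 => ->; rewrite leq_addr.
  + rewrite (@logn_ndvd r c'); last first.
      by apply/negP => h; have [h1 _] := hc' _ pr h; have := leq_ltn_trans h1 (leq_trans rq qq'); rewrite ltnn.
    rewrite (@logn_ndvd r c); last first.
      by apply/negP => h; have [h1 _] := hc _ pr h; have := leq_ltn_trans h1 rq; rewrite ltnn.
    by rewrite !addn0 => ->.
Qed.

Lemma struct_a a : composite a ->
  [/\ prime (P a), a = astar a * P a, 1 < astar a, prime (P (astar a)) &
      P (astar a) %| astar a /\ forall r, prime r -> r %| astar a -> r <= P (astar a)].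
Proof.
case=> a1 npa.
have pp : prime (P a) by apply: max_pdiv_prime.
have ea : a = astar a * P a by rewrite /astar divnK // /P max_pdiv_dvd.
have s1 : 1 < astar a.
  case: (ltnP 1 (astar a)) => // h.
  move: ea; case: (astar a) h => [|[|//]] _; first by rewrite mul0n => e; rewrite e in a1.
  by rewrite mul1n => e; rewrite -e in pp; rewrite pp in npa.
split=> //.
- exact: max_pdiv_prime.
split; first exact: max_pdiv_dvd.
move=> r pr rd; apply: max_pdiv_max; rewrite mem_primes pr rd ltnW //.
Qed.


Module RealPart.
Local Open Scope R_scope.

Lemma INR_pos n : (0 < n)%N -> (0 < INR n).
Proof. by move=> h; apply: lt_0_INR; apply/ltP. Qed.

Lemma ln_lt_nat r n : (0 < r)%N -> (0 < n)%N -> (ln (INR r) < ln (INR n)) -> (r < n)%N.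
Proof.
move=> r0 n0 h; apply/ltP; apply: INR_lt; apply: ln_lt_inv => //; exact: INR_pos.
Qed.

Lemma ln_le_nat r n : (0 < r)%N -> (r <= n)%N -> (ln (INR r) <= ln (INR n)).
Proof.
move=> r0; rewrite leq_eqVlt => /orP[/eqP -> | h]; first lra.
left; apply: ln_increasing; first exact: INR_pos.
by apply: lt_INR; apply/ltP.
Qed.

Lemma ln_pos_nat n : (1 < n)%N -> (0 < ln (INR n)).
Proof.
move=> h; rewrite -ln_1; apply: ln_increasing; first lra.
by have := lt_INR 1 n (ltP h).
Qed.

Lemma lt_Rpower_ln n x y : (0 < n)%N -> (INR n < Rpower x y) -> (ln (INR n) < y * ln x).
Proof.
move=> n0 h; rewrite /Rpower in h; rewrite -[(y * ln x)]ln_exp.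
apply: ln_increasing => //; exact: INR_pos.
Qed.

Lemma real_pair a c v : (0 < v) /\ (v < 1) -> composite a ->
  (INR a < Rpower (INR (P a)) (1 + v)) -> Cset a v c ->
  [/\ (ln (INR (P (astar a))) < sqrt v * sqrt v * ln (INR (P a))),
      (0 < ln (INR (P a))), (0 < ln (INR (P (astar a)))) &
      forall r, prime r -> r %| c -> (sqrt v * ln (INR r) < ln (INR (P (astar a))))].
Proof.
move=> [v0 v1] ca ha [c0 hc].
case: (struct_a ca) => pp ea s1 pq [qs hs].
have t0 : (0 < sqrt v) by apply: sqrt_lt_R0.
rewrite sqrt_sqrt; last lra.
have lp := ln_pos_nat (prime_gt1 pp).
have lq := ln_pos_nat (prime_gt1 pq).
split=> //.
- have a0 : (0 < a)%N by case: ca => /ltnW.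
  have := lt_Rpower_ln a0 ha.
  rewrite {1}ea mult_INR ln_mult; [|exact: INR_pos (ltnW s1)|exact: INR_pos (prime_gt0 pp)].
  have := ln_le_nat (prime_gt0 pq) (dvdn_leq (ltnW s1) qs).
  nra.
- move=> r pr rc; have [_ h] := hc r pr rc.
  have := lt_Rpower_ln (prime_gt0 pr) h.
  set L := ln (INR r); set M := ln (INR (P (astar a))).
  rewrite /Rdiv Rmult_1_l => h2.
  have -> : M = (sqrt v * (/ sqrt v * M)) by field; lra.
  apply: Rmult_lt_compat_l => //.
Qed.


Lemma sqrt_in v : 0 < v /\ v < 1 -> 0 < sqrt v /\ sqrt v < 1.
Proof.
move=> [v0 v1]; split; first exact: sqrt_lt_R0.
rewrite -sqrt_1; apply: sqrt_lt_1; lra.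
Qed.

Lemma tt_lt t L : 0 < t -> t < 1 -> 0 < L -> t * L < L /\ t * t * L < t * L.
Proof.
move=> t0 t1 L0.
have e1 : t * L < L by nra.
split=> //. rewrite Rmult_assoc. apply: Rmult_lt_compat_l => //.
Qed.

Lemma tdiv t x y : 0 < t -> t * x < t * y -> x < y.
Proof. move=> t0 h. nra. Qed.

Lemma pair_nat a c v : 0 < v /\ v < 1 -> composite a ->
  (INR a < Rpower (INR (P a)) (1 + v)) -> Cset a v c ->
  (P (astar a) < P a)%N /\ forall r, prime r -> r %| c -> (r < P a)%N.
Proof.
move=> hv ca ha hc.
have [t0 t1] := sqrt_in hv.
case: (real_pair hv ca ha hc) => h1 h2 h3 h4.
case: (struct_a ca) => pp ea s1 pq [qs hs].
have [e1 e2] := tt_lt t0 t1 h2.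
split.
- apply: ln_lt_nat; [exact: prime_gt0 | exact: prime_gt0 |]. lra.
- move=> r pr rc; have := h4 r pr rc => h.
  apply: ln_lt_nat; [exact: prime_gt0 | exact: prime_gt0 |].
  have : ln (INR r) < sqrt v * ln (INR (P a)) by apply: (tdiv t0); lra.
  lra.
Qed.

Lemma cross a c a' c' v : 0 < v /\ v < 1 -> composite a ->
  (INR a < Rpower (INR (P a)) (1 + v)) -> Cset a v c ->
  composite a' ->
  (INR a' < Rpower (INR (P a')) (1 + v)) -> Cset a' v c' ->
  (P a %| c' \/ (P a <= P (astar a'))%N) ->
  (P (astar a) < P (astar a'))%N /\ forall r, prime r -> r %| c -> (r < P (astar a'))%N.
Proof.
move=> hv ca ha hc ca' ha' hc' hyp.
have [t0 t1] := sqrt_in hv.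
case: (real_pair hv ca ha hc) => h1 h2 h3 h4.
case: (real_pair hv ca' ha' hc') => h1' h2' h3' h4'.
case: (struct_a ca) => pp ea s1 pq [qs hs].
case: (struct_a ca') => pp' ea' s1' pq' [qs' hs'].
have [e1 e2] := tt_lt t0 t1 h2.
have [e1' e2'] := tt_lt t0 t1 h3'.
have key : sqrt v * ln (INR (P a)) < ln (INR (P (astar a'))).
  case: hyp => h.
  - exact: h4'.
  - have := ln_le_nat (prime_gt0 pp) h. lra.
have key2 : sqrt v * (sqrt v * ln (INR (P a))) < sqrt v * ln (INR (P (astar a')))
  by apply: Rmult_lt_compat_l.
split.
- apply: ln_lt_nat; [exact: prime_gt0 | exact: prime_gt0 |]. lra.
- move=> r pr rc; have := h4 r pr rc => h.
  apply: ln_lt_nat; [exact: prime_gt0 | exact: prime_gt0 |].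
  have : ln (INR r) < sqrt v * ln (INR (P a)) by apply: (tdiv t0); lra.
  lra.
Qed.

End RealPart.
Import RealPart.

Lemma same_c_le s p c c' x : 0 < s -> prime p -> 0 < c -> 0 < c' ->
  (forall r, prime r -> r %| c -> r < p) ->
  (forall r, prime r -> r < p -> logn r x = logn r (s * p * c)) ->
  (forall r, prime r -> r < p -> logn r x = logn r (s * p * c')) ->
  c %| c'.
Proof.
move=> s0 pp c0 c0' hc hx hx'.
apply: dvd_logn => // r pr.
case: (boolP (r %| c)) => rc; last by rewrite logn_ndvd.
have rp := hc _ pr rc.
have p0 := prime_gt0 pp.
have := hx _ pr rp; rewrite hx' // !logn3 // => /eqP.
by rewrite eqn_add2l => /eqP ->.
Qed.

Theorem lemma3p1 (A : nat -> Prop) (v : R) :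
  primitive_set A ->
  (forall a, A a -> composite a) ->
  Rlt R0 v /\ Rlt v R1 ->
  (forall a, A a -> Rlt (INR a) (Rpower (INR (P a)) (Rplus R1 v))) ->
  forall a c a' c',
    A a -> Cset a v c -> A a' -> Cset a' v c' ->
    (a, c) <> (a', c') ->
    forall x, ~ (Lset (a * c) x /\ Lset (a' * c') x).
Proof.
move=> prim comp hv hP a c a' c' Aa Cc Aa' Cc' neq x [L1 L2].
have ca := comp a Aa; have ca' := comp a' Aa'.
have ha := hP a Aa; have ha' := hP a' Aa'.
have [qp hcp] := pair_nat hv ca ha Cc.
have [qp' hcp'] := pair_nat hv ca' ha' Cc'.
have cr1 := cross hv ca ha Cc ca' ha' Cc'.
have cr2 := cross hv ca' ha' Cc' ca ha Cc.
case: (struct_a ca) => pp ea s1 pq [qs hs].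
case: (struct_a ca') => pp' ea' s1' pq' [qs' hs'].
case: Cc => c0 hcq; case: Cc' => c0' hcq'.
have hc : forall r, prime r -> r %| c -> P (astar a) <= r /\ r < P a.
  by move=> r pr rc; split; [case: (hcq r pr rc) | exact: hcp].
have hc' : forall r, prime r -> r %| c' -> P (astar a') <= r /\ r < P a'.
  by move=> r pr rc; split; [case: (hcq' r pr rc) | exact: hcp'].
have em : a * c = astar a * P a * c by rewrite {1}ea.
have em' : a' * c' = astar a' * P a' * c' by rewrite {1}ea'.
have Pm : P (a * c) = P a.
  rewrite em; apply: P_of => //; first exact: ltnW.
  - by move=> r pr rs; apply: ltnW; apply: leq_ltn_trans (hs r pr rs) qp.
  - by move=> r pr rc; apply: ltnW; apply: hcp.
have Pm' : P (a' * c') = P a'.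
  rewrite em'; apply: P_of => //; first exact: ltnW.
  - by move=> r pr rs; apply: ltnW; apply: leq_ltn_trans (hs' r pr rs) qp'.
  - by move=> r pr rc; apply: ltnW; apply: hcp'.
have m0 : 0 < a * c by rewrite muln_gt0 c0 andbT; case: ca => /ltnW.
have m0' : 0 < a' * c' by rewrite muln_gt0 c0' andbT; case: ca' => /ltnW.
have [x0 dx hx] := lset_val m0 L1.
have [_ dx' hx'] := lset_val m0' L2.
rewrite Pm em in hx; rewrite Pm' em' in hx'.
rewrite em in dx; rewrite em' in dx'.
have core1 := core pp pq s1 qs hs qp c0 hc pp' pq' s1' qs' hs' qp' c0' hc' x0 dx hx hx' cr1.
have core2 := core pp' pq' s1' qs' hs' qp' c0' hc' pp pq s1 qs hs qp c0 hc x0 dx' hx' hx cr2.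
rewrite -ea -ea' in core1 core2.
have eaa : a = a'.
  case: (ltngtP (P a) (P a')) => hpp.
  - by apply: prim => //; apply: core1; left.
  - by apply/esym; apply: prim => //; apply: core2; left.
  case: (ltngtP (P (astar a)) (P (astar a'))) => hqq.
  - by apply: prim => //; apply: core1; right; split => //; left.
  - by apply/esym; apply: prim => //; apply: core2; right; split => //; left.
  case: (leqP (logn (P (astar a)) (astar a)) (logn (P (astar a)) (astar a'))) => hl.
  - by apply: prim => //; apply: core1; right; split => //; right.
  - apply/esym; apply: prim => //; apply: core2; right; split => //; right; split => //.
    by rewrite -hqq; apply: ltnW.
subst a'.
apply: neq; congr pair.
apply/eqP; rewrite eqn_dvd; apply/andP; split.
- apply: (same_c_le (ltnW s1) pp c0 c0' hcp hx hx').
- apply: (same_c_le (ltnW s1) pp c0' c0 hcp' hx' hx).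
Qed.
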